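(* Let $H$ be a Hilbert space and $L:H\to[0,\infty)$ of class $C^2$, and assume that for some $c>0$, $$|\nabla L(x)|\ge c\,\frac{\sqrt{L(x)}}{1+|x|}\quad\text{for all }x\in H.$$ Let $(x_t)_{t\ge0}$ solve $\dot x(t)=-\nabla L(x(t))$ with $x(0)=0$. Then there exists $x_\infty\in H$ with $|x_\infty|\le e^{\frac2c\sqrt{L(0)}}-1$, $L(x_\infty)=0$ and $\lim_{t\to\infty}x(t)=x_\infty$. *)

(* Defs.v *)
From mathcomp Require Import all_boot all_order all_algebra.
From mathcomp Require Import all_classical all_reals all_analysis.
Set Implicit Arguments. Unset Strict Implicit. Unset Printing Implicit Defensive.
Import Order.TTheory GRing.Theory Num.Theory.
Import numFieldNormedType.Exports.
Local Open Scope classical_set_scope.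
Local Open Scope ring_scope.

Definition is_hilbert_inner (R : realType) (H : completeNormedModType R)
    (inner : H -> H -> R) : Prop :=
  [/\ forall x y, inner x y = inner y x,
      forall a x y z, inner (a *: x + y) z = a * inner x z + inner y z
    & forall x, `|x| ^+ 2 = inner x x].

Definition is_gradient (R : realType) (H : completeNormedModType R)
    (inner : H -> H -> R) (L : H -> R) (g : H -> H) : Prop :=
  forall x, differentiable L x /\ forall v, 'd L x v = inner (g x) v.

Definition is_C2_with_gradient (R : realType) (H : completeNormedModType R)
    (inner : H -> H -> R) (L : H -> R) (g : H -> H) : Prop :=
  [/\ is_gradient inner L g,
      forall x, differentiable g x
    & forall x (eps : R), 0 < eps -> exists2 delta : R, 0 < delta &
        forall y, `|y - x| < delta ->
          forall v, `|'d g y v - 'd g x v| <= eps * `|v| ].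

Definition is_gradient_flow (R : realType) (H : completeNormedModType R)
    (g : H -> H) (x : R -> H) (x0 : H) : Prop :=
  [/\ x 0 = x0,
      x t @[t --> 0^'+] --> x 0
    & forall t : R, 0 < t -> is_derive t 1 x (- g (x t))].

(* Main.v *)
From HB Require Import structures.
Require Import Defs.
From mathcomp Require Import all_boot all_order all_algebra.
From mathcomp Require Import all_classical all_reals all_analysis.
From mathcomp Require Import ring lra.
Import Order.TTheory GRing.Theory Num.Theory.
Import numFieldNormedType.Exports.
Local Open Scope classical_set_scope.
Local Open Scope ring_scope.
Set Implicit Arguments. Unset Strict Implicit. Unset Printing Implicit Defensive.

Lemma innerC (R : realType) (H : completeNormedModType R) (inner : H -> H -> R) :
  is_hilbert_inner inner -> forall x y, inner x y = inner y x.
Proof. by case. Qed.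

Lemma innerDl (R : realType) (H : completeNormedModType R) (inner : H -> H -> R) :
  is_hilbert_inner inner -> forall x y z, inner (x + y) z = inner x z + inner y z.
Proof. by case=> _ hl _ x y z; rewrite -[x in LHS]scale1r hl mul1r. Qed.

Lemma inner0l (R : realType) (H : completeNormedModType R) (inner : H -> H -> R) :
  is_hilbert_inner inner -> forall z, inner 0 z = 0.
Proof.
move=> hI z; have := innerDl hI 0 0 z; rewrite addr0; lra.
Qed.

Lemma innerZl (R : realType) (H : completeNormedModType R) (inner : H -> H -> R) :
  is_hilbert_inner inner -> forall a x z, inner (a *: x) z = a * inner x z.
Proof.
move=> hI a x z; have [_ hl _] := hI.
by have := hl a x 0 z; rewrite addr0 (inner0l hI) addr0.
Qed.

Lemma innerNl (R : realType) (H : completeNormedModType R) (inner : H -> H -> R) :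
  is_hilbert_inner inner -> forall x z, inner (- x) z = - inner x z.
Proof. by move=> hI x z; rewrite -scaleN1r (innerZl hI) mulN1r. Qed.

Lemma innerBl (R : realType) (H : completeNormedModType R) (inner : H -> H -> R) :
  is_hilbert_inner inner -> forall x y z, inner (x - y) z = inner x z - inner y z.
Proof. by move=> hI x y z; rewrite (innerDl hI) (innerNl hI). Qed.

Lemma innerDr (R : realType) (H : completeNormedModType R) (inner : H -> H -> R) :
  is_hilbert_inner inner -> forall x y z, inner z (x + y) = inner z x + inner z y.
Proof. by move=> hI x y z; rewrite !(innerC hI z) (innerDl hI). Qed.

Lemma innerZr (R : realType) (H : completeNormedModType R) (inner : H -> H -> R) :
  is_hilbert_inner inner -> forall a x z, inner z (a *: x) = a * inner z x.
Proof. by move=> hI a x z; rewrite !(innerC hI z) (innerZl hI). Qed.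

Lemma innerNr (R : realType) (H : completeNormedModType R) (inner : H -> H -> R) :
  is_hilbert_inner inner -> forall x z, inner z (- x) = - inner z x.
Proof. by move=> hI x z; rewrite !(innerC hI z) (innerNl hI). Qed.

Lemma inner0r (R : realType) (H : completeNormedModType R) (inner : H -> H -> R) :
  is_hilbert_inner inner -> forall z, inner z 0 = 0.
Proof. by move=> hI z; rewrite (innerC hI) (inner0l hI). Qed.

Lemma innerii (R : realType) (H : completeNormedModType R) (inner : H -> H -> R) :
  is_hilbert_inner inner -> forall x, inner x x = `|x| ^+ 2.
Proof. by case=> _ _ h x; rewrite h. Qed.

Lemma inner_sq (R : realType) (H : completeNormedModType R) (inner : H -> H -> R) :
  is_hilbert_inner inner -> forall u v,
  inner (u + v) (u + v) = inner u u + 2 * inner u v + inner v v.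
Proof.
move=> hI u v; rewrite !(innerDl hI) !(innerDr hI) (innerC hI v u).
lra.
Qed.

Lemma inner_CS (R : realType) (H : completeNormedModType R) (inner : H -> H -> R) :
  is_hilbert_inner inner -> forall a b, `|inner a b| <= `|a| * `|b|.
Proof.
move=> hI a b.
have [ab0|abgt0] := eqVneq (`|a| * `|b|) 0.
  move: ab0 => /eqP; rewrite mulf_eq0 !normr_eq0 => /orP[]/eqP->.
    by rewrite (inner0l hI) normr0 normr0 mul0r.
  by rewrite (inner0r hI) !normr0 mulr0.
have pos : 0 < `|a| * `|b| by rewrite lt_def abgt0 mulr_ge0.
have key : forall s : R, s * s = 1 ->
    s * (`|a| * `|b|) * inner a b <= (`|a| * `|b|) ^+ 2.
  move=> s ss.
  have := inner_sq hI (`|b| *: a) ((- s * `|a|) *: b).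
  rewrite !(innerZl hI) !(innerZr hI) !(innerii hI) => e.
  pose u := `|b| *: a + (- s * `|a|) *: b.
  have : 0 <= `|u| ^+ 2 by rewrite sqr_ge0.
  rewrite /u e => h.
  have E : `|b| * (`|b| * `|a| ^+ 2) + 2 * (`|b| * (- s * `|a| * inner a b))
     + - s * `|a| * (- s * `|a| * `|b| ^+ 2)
     = 2 * ((`|a| * `|b|) ^+ 2 - s * (`|a| * `|b|) * inner a b).
    have : - s * `|a| * (- s * `|a| * `|b| ^+ 2) = (s * s) * (`|a| ^+2 * `|b| ^+ 2).
      by ring.
    by move=> ->; rewrite ss; ring.
  by move: h; rewrite E pmulr_rge0 // subr_ge0.
rewrite ler_norml; apply/andP; split.
  have h1 : (-1 : R) * -1 = 1 by rewrite mulN1r opprK.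
  have := key _ h1; rewrite expr2 => h.
  rewrite lerNl -(ler_pM2l pos); lra.
have := key 1 (mulr1 1); rewrite expr2 => h.
rewrite -(ler_pM2l pos); lra.
Qed.


Lemma chain_der (R : realType) (H : normedModType R) (F : H -> R^o) (y : R -> H) t v :
  differentiable F (y t) -> is_derive t 1 y v ->
  is_derive t 1 (F \o y) ('d F (y t) v).
Proof.
move=> dF [dy dyv].
have dy' : differentiable y t by apply/derivable1_diffP.
have dc : differentiable (F \o y) t by exact: differentiable_comp.
apply: DeriveDef; first exact/derivable1_diffP.
by rewrite deriveE // diff_comp //= -dyv deriveE.
Qed.

Lemma diffQ (R : realType) (H : completeNormedModType R) (inner : H -> H -> R)
  (hI : is_hilbert_inner inner) (p : H) :
  differentiable (fun z => inner z z : R^o) p /\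
  'd (fun z => inner z z : R^o) p = (fun h => 2 * inner p h) :> (H -> R^o).
Proof.
pose d (h : H) : R^o := 2 * inner p h.
have lind : linear d.
  move=> a u w; rewrite /d (innerDr hI) (innerZr hI).
  by rewrite /GRing.scale /=; ring.
pose dlM := GRing.isLinear.Build _ _ _ _ _ lind.
pose dL : {linear H -> R^o} := HB.pack d dlM.
have dLc : continuous dL.
  apply/linear_bounded_continuous/linear_boundedP.
  near=> r => h; rewrite /= /d normrM (ger0_norm (ler0n _ 2)).
  rewrite (le_trans (ler_wpM2l (ler0n _ 2) (inner_CS hI p h))) // mulrA.
  rewrite ler_wpM2r //; near: r; apply: nbhs_pinfty_ge.
have ex : (fun z => inner z z : R^o) \o shift p = cst (inner p p) + dL +o_ 0 id.
  apply/eqaddoP => e e0; near=> h => /=.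
  have E : inner (h + p) (h + p) - (inner p p + d h) = `|h| ^+ 2.
    by rewrite /d [h + p]addrC (inner_sq hI) (innerii hI h) addrAC subrr add0r.
  rewrite -[X in `|X|]/(inner (h + p) (h + p) - (inner p p + d h)) E {E}.
  rewrite ger0_norm ?sqr_ge0 // expr2; apply: ler_wpM2r => //.
have dQ : 'd (fun z => inner z z : R^o) p = dL :> (H -> R^o).
  exact: diff_unique.
split; last by rewrite dQ.
by apply/diff_locallyP; rewrite dQ.
Unshelve. all: by end_near. Qed.


Lemma mono (R : realType) (f : R -> R) (a b : R) :
  0 <= a -> a <= b ->
  (forall t, 0 < t -> {for t, continuous f}) ->
  f x @[x --> 0^'+] --> f 0 ->
  (forall t, a < t -> t < b -> exists2 d, is_derive t 1 f d & d <= 0) ->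
  f b <= f a.
Proof.
move=> a0 ab fc f0 fd.
have pos : forall a', 0 < a' -> a <= a' -> a' <= b -> f b <= f a'.
  move=> a' a'0 aa' a'b.
  apply: (@ler0_derive1_le_cc _ f a' b) => //.
  - move=> t; rewrite in_itv /= => /andP[t1 t2].
    have [d [fd1 _] _] := fd t (le_lt_trans aa' t1) t2; exact: fd1.
  - move=> t; rewrite in_itv /= => /andP[t1 t2].
    have [d [fd1 fd2] dle] := fd t (le_lt_trans aa' t1) t2.
    by rewrite derive1E fd2.
  - apply: continuous_in_subspaceT => z; rewrite inE /= in_itv /= => /andP[z1 _].
    exact/fc/(lt_le_trans a'0 z1).
  - by rewrite in_itv /= lexx a'b.
  - by rewrite in_itv /= lexx a'b.
have [a0'|] := ltP 0 a; first exact: pos.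
move=> a_le0; have a_eq0 : a = 0 by apply/le_anti; rewrite a_le0 a0.
subst a.
have [b0|] := ltP 0 b; last first.
  by move=> b_le0; have -> : b = 0 by apply/le_anti; rewrite b_le0 ab.
have Hn : \forall a' \near (0:R)^'+, f b <= f a'.
  near=> a'.
  have h1 : 0 < a' by near: a'; exact: nbhs_right_gt.
  have h2 : a' <= b by near: a'; exact: nbhs_right_le.
  by apply: pos => //; exact: ltW.
exact: (cvgr_to_ge f0 Hn).
Unshelve. all: by end_near. Qed.


Lemma core (R : realType) (f h : R -> R) (a b : R) :
  0 <= a -> a <= b ->
  (forall t, 0 < t -> {for t, continuous f}) ->
  f x @[x --> 0^'+] --> f 0 ->
  (forall t, 0 <= t -> 0 <= h t) ->
  (forall t, 0 < t -> 0 < h t -> exists2 d, is_derive t 1 f d & d <= 0) ->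
  (forall s, 0 <= s -> h s = 0 -> forall t, s <= t -> f t = f s) ->
  f b <= f a.
Proof.
move=> a0 ab fc f0 h0 hpos hz.
case: (pselect (exists e, [/\ a <= e, e <= b, h e = 0 &
    forall s, a <= s -> s < e -> h s != 0])) => [[e [ae eb he hs]]|noex].
  have e0 : 0 <= e by apply: le_trans ae.
  rewrite (hz e e0 he b eb); apply: mono => // t ta te.
  have t0 : 0 < t by apply: le_lt_trans ta.
  apply: hpos => //; rewrite lt_def hs ?h0 //; exact: ltW.
apply: mono => // t ta tb.
have t0 : 0 < t by apply: le_lt_trans ta.
have [ht|] := ltP 0 (h t); first exact: hpos.
move=> ht_le0; have ht0 : h t = 0 by apply/le_anti; rewrite ht_le0 h0 // ltW.
have [s [sa st hs0]] : exists s, [/\ a <= s, s < t & h s = 0].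
  apply: contrapT => nE; apply: noex; exists t; split; [exact: ltW|exact: ltW|exact: ht0|].
  move=> s sa st; apply/negP => /eqP hs0; apply: nE; exists s; split => //.
exists 0 => //.
have s0 : 0 <= s by apply: le_trans sa.
apply: (@near_eq_is_derive _ _ _ (cst (f s)) f t 1 0 _ (is_derive_cst (f s) t 1)).
near=> τ; rewrite /cst (hz s s0 hs0) //; apply: ltW.
by near: τ; exact: lt_nbhsr.
Unshelve. all: by end_near. Qed.


Lemma dD (R : realType) (F G : R -> R) (t dF dG : R) :
  is_derive t 1 F dF -> is_derive t 1 G dG ->
  is_derive t 1 (fun τ => F τ + G τ) (dF + dG).
Proof. by move=> hF hG; have := is_deriveD hF hG. Qed.

Lemma dM (R : realType) (F G : R -> R) (t dF dG : R) :
  is_derive t 1 F dF -> is_derive t 1 G dG ->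
  is_derive t 1 (fun τ => F τ * G τ) (F t * dG + G t * dF).
Proof. by move=> hF hG; have := is_deriveM hF hG. Qed.

Lemma dK (R : realType) (F : R -> R) (k t dF : R) :
  is_derive t 1 F dF -> is_derive t 1 (fun τ => k * F τ) (k * dF).
Proof. by move=> hF; have := is_deriveZ k hF. Qed.

Lemma dC (R : realType) (k t : R) : is_derive t 1 (fun _ : R => k) 0.
Proof. exact: is_derive_cst. Qed.

Lemma did (R : realType) (t : R) : is_derive t 1 (fun τ : R => τ) 1.
Proof. exact: is_derive_id. Qed.

Lemma dcomp (R : realType) (F phi : R -> R) (t a b : R) :
  is_derive (F t) 1 phi a -> is_derive t 1 F b ->
  is_derive t 1 (fun τ => phi (F τ)) (a * b).
Proof. by move=> h1 h2; have := is_derive1_comp h1 h2. Qed.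

Lemma dsqrt (R : realType) (F : R -> R) (t b : R) :
  0 < F t -> is_derive t 1 F b ->
  is_derive t 1 (fun τ => Num.sqrt (F τ)) ((2 * Num.sqrt (F t))^-1 * b).
Proof. by move=> h0 h; apply: dcomp => //; exact: is_derive1_sqrt. Qed.

Lemma dexp (R : realType) (F : R -> R) (t b : R) :
  is_derive t 1 F b ->
  is_derive t 1 (fun τ => expR (F τ)) (expR (F t) * b).
Proof. by move=> h; apply: dcomp => //; exact: is_derive_expR. Qed.


Definition Hyp (R : realType) (H : completeNormedModType R)
  (inner : H -> H -> R) (L : H -> R) (g : H -> H) (c : R) (x : R -> H) :=
  [/\ is_hilbert_inner inner, (forall y, 0 <= L y), is_gradient inner L g,
      0 < c & ((forall y, `|g y| >= c * Num.sqrt (L y) / (1 + `|y|))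
    /\ is_gradient_flow g x 0)].

Lemma x_der (R : realType) (H : completeNormedModType R) inner L g c (x : R -> H) :
  Hyp inner L g c x -> forall t : R, 0 < t -> is_derive t 1 x (- g (x t)).
Proof. by case=> _ _ _ _ [_ [_ _ hd]]. Qed.

Lemma L_cont (R : realType) (H : completeNormedModType R) inner L g c (x : R -> H) :
  Hyp inner L g c x -> continuous L.
Proof.
case=> _ _ hg _ _ y; have [dL _] := hg y.
exact: differentiable_continuous.
Qed.

Lemma x_cont (R : realType) (H : completeNormedModType R) inner L g c (x : R -> H) :
  Hyp inner L g c x -> forall t : R, 0 < t -> {for t, continuous x}.
Proof.
move=> hyp t t0; have [dx _] := x_der hyp t0.
apply: differentiable_continuous; exact/derivable1_diffP.
Qed.

Lemma comp_cont (R : realType) (H : completeNormedModType R) inner L g c (x : R -> H)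
  (Phi : H -> R) :
  Hyp inner L g c x -> continuous Phi ->
  (forall t : R, 0 < t -> {for t, continuous (fun τ => Phi (x τ))}) /\
  Phi (x τ) @[τ --> 0^'+] --> Phi (x 0).
Proof.
move=> hyp Pc; split.
  move=> t t0; apply: (continuous_comp (x_cont hyp t0)); exact: Pc.
have [_ _ _ _ [_ [_ xr _]]] := hyp.
apply: cvg_comp xr _; exact: Pc.
Qed.

Lemma h_der (R : realType) (H : completeNormedModType R) inner L g c (x : R -> H) :
  Hyp inner L g c x -> forall t : R, 0 < t ->
  is_derive t 1 (fun τ => L (x τ)) (- `|g (x t)| ^+ 2).
Proof.
move=> hyp t t0; have [hI _ hg _ _] := hyp.
have [dL dLv] := hg (x t).
have := chain_der dL (x_der hyp t0).
by rewrite dLv (innerNr hI) (innerii hI).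
Qed.

Lemma N_der (R : realType) (H : completeNormedModType R) inner L g c (x : R -> H) (p : H) :
  Hyp inner L g c x -> forall t : R, 0 < t ->
  is_derive t 1 (fun τ => inner (x τ - p) (x τ - p))
     (2 * inner (x t - p) (- g (x t))).
Proof.
move=> hyp t t0; have [hI _ _ _ _] := hyp.
have [dQ dQv] := diffQ hI (x t - p).
have hy : is_derive t 1 (fun τ => x τ - p) (- g (x t)).
  have := is_deriveB (x_der hyp t0) (is_derive_cst p t 1).
  by rewrite subr0.
have := chain_der dQ hy.
by rewrite dQv.
Qed.

Lemma Q_cont (R : realType) (H : completeNormedModType R) (inner : H -> H -> R) (p : H) :
  is_hilbert_inner inner -> continuous (fun y => inner (y - p) (y - p)).
Proof.
move=> hI y.
have [dQ _] := diffQ hI (y - p).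
apply: (@continuous_comp _ _ _ (fun y => y - p) (fun z => inner z z : R^o)).
  by apply: cvgB; [exact: cvg_id|exact: cvg_cst].
exact: differentiable_continuous.
Qed.


Lemma ineq_is (R : realType) (u s n i : R) :
  0 <= u -> 0 < s -> n <= s -> i <= n * u -> (2 * s)^-1 * (2 * i + 0) <= u.
Proof.
move=> u0 s0 ns iu.
have -> : (2 * s)^-1 * (2 * i + 0) = i / s.
  have sn : s != 0 by rewrite gt_eqF.
  by field.
rewrite ler_pdivrMr //.
have : n * u <= s * u by apply: ler_wpM2r.
lra.
Qed.

Lemma ineq_u (R : realType) (c phi u A : R) :
  0 < c -> 0 < phi -> 0 <= u -> c * phi <= A * u ->
  u <= A * u ^+ 2 / (c * phi).
Proof.
move=> c0 p0 u0 h.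
have cp : 0 < c * phi by apply: mulr_gt0.
rewrite ler_pdivlMr // expr2 mulrA.
have := ler_wpM2r u0 h.
lra.
Qed.

Lemma ineqP (R : realType) (c phi u s n i E : R) :
  0 < c -> 0 < phi -> 0 <= u -> 0 < s -> 0 <= n -> n <= s -> i <= n * u ->
  c * phi <= (1 + n) * u -> 0 < E ->
  (1 + s) * (E * (2 / c * ((2 * phi)^-1 * - u ^+ 2))) +
    E * (0 + (2 * s)^-1 * (2 * i + 0)) <= 0.
Proof.
move=> c0 p0 u0 s0 n0 ns iu hb E0.
have h1 := ineq_is u0 s0 ns iu.
have hb' : c * phi <= (1 + s) * u.
  apply: le_trans hb _; apply: ler_wpM2r => //; lra.
have h2 := ineq_u c0 p0 u0 hb'.
have e : (1 + s) * (E * (2 / c * ((2 * phi)^-1 * - u ^+ 2))) =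
    - E * ((1 + s) * u ^+ 2 / (c * phi)).
  field; rewrite ?(gt_eqF c0) ?(gt_eqF p0) //.
rewrite e add0r.
have : E * ((2 * s)^-1 * (2 * i + 0)) <= E * ((1 + s) * u ^+ 2 / (c * phi)).
  apply: ler_wpM2l; [exact: ltW| exact: le_trans h1 h2].
lra.
Qed.

Lemma ineqQ (R : realType) (c phi u s n i M : R) :
  0 < c -> 0 < phi -> 0 <= u -> 0 < s -> n <= s -> i <= n * u ->
  c * phi <= (1 + M) * u ->
  (2 * s)^-1 * (2 * i + 0) + 2 * (1 + M) / c * ((2 * phi)^-1 * - u ^+ 2) <= 0.
Proof.
move=> c0 p0 u0 s0 ns iu hb.
have h1 := ineq_is u0 s0 ns iu.
have h2 := ineq_u c0 p0 u0 hb.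
have e : 2 * (1 + M) / c * ((2 * phi)^-1 * - u ^+ 2) =
    - ((1 + M) * u ^+ 2 / (c * phi)).
  field; rewrite ?(gt_eqF c0) ?(gt_eqF p0) //.
rewrite e; lra.
Qed.


Lemma h_mono (R : realType) (H : completeNormedModType R) inner L g c (x : R -> H) :
  Hyp inner L g c x -> forall s t : R, 0 <= s -> s <= t -> L (x t) <= L (x s).
Proof.
move=> hyp s t s0 st.
have [c1 c2] := comp_cont hyp (L_cont hyp).
apply: (mono (f := fun τ => L (x τ))) => // τ τ1 τ2.
have τ0 : 0 < τ by apply: le_lt_trans τ1.
exists (- `|g (x τ)| ^+ 2); first exact: (h_der hyp τ0).
by rewrite oppr_le0 sqr_ge0.
Qed.

Lemma x_const (R : realType) (H : completeNormedModType R) inner L g c (x : R -> H) :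
  Hyp inner L g c x -> forall s : R, 0 <= s -> L (x s) = 0 ->
  forall t, s <= t -> x t = x s.
Proof.
move=> hyp s s0 hs t st.
have [hI L0 _ _ _] := hyp.
have hz : forall τ, s <= τ -> L (x τ) = 0.
  move=> τ sτ; apply/le_anti; rewrite L0 andbT -hs; exact: (h_mono hyp s0 sτ).
have g0 : forall τ, s < τ -> g (x τ) = 0.
  move=> τ sτ; have τ0 : 0 < τ by apply: le_lt_trans sτ.
  have d1 : is_derive τ 1 (fun τ => L (x τ)) 0.
    apply: (@near_eq_is_derive _ _ _ (cst 0) _ τ 1 0 _ (is_derive_cst 0 τ 1)).
    near=> τ'; rewrite /cst hz //; apply: ltW.
    by near: τ'; exact: lt_nbhsr.
  case: d1 => _ e1; case: (h_der hyp τ0) => _ e2.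
  have : `|g (x τ)| ^+ 2 = 0 by apply: oppr_inj; rewrite -e2 e1 oppr0.
  by move/eqP; rewrite expf_eq0 /= normr_eq0 => /eqP.
have [c1 c2] := comp_cont hyp (Q_cont (p := x s) hI).
have : inner (x t - x s) (x t - x s) <= inner (x s - x s) (x s - x s).
  apply: (mono (f := fun τ => inner (x τ - x s) (x τ - x s))) => // τ τ1 τ2.
  have τ0 : 0 < τ by apply: le_lt_trans τ1.
  exists (2 * inner (x τ - x s) (- g (x τ))); first exact: (N_der _ hyp τ0).
  by rewrite g0 // oppr0 (inner0r hI) mulr0.
rewrite subrr (inner0l hI) (innerii hI) => h.
apply/eqP; rewrite -subr_eq0 -normr_eq0 -sqrf_eq0.
by rewrite eq_le h sqr_ge0.
Unshelve. all: by end_near. Qed.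


Lemma norm_le_sqrt (R : realType) (H : completeNormedModType R) (inner : H -> H -> R)
  (a : H) (e : R) : is_hilbert_inner inner -> 0 <= e ->
  `|a| <= Num.sqrt (inner a a + e).
Proof.
move=> hI e0; rewrite (innerii hI) -[leLHS]normr_id -sqrtr_sqr ler_sqrt.
  by rewrite lerDl.
by rewrite addr_ge0 // sqr_ge0.
Qed.

Lemma grad_bound (R : realType) (H : completeNormedModType R) inner L g c (x : R -> H)
  (y : H) : Hyp inner L g c x -> c * Num.sqrt (L y) <= (1 + `|y|) * `|g y|.
Proof.
case=> _ _ _ _ [hb _]; have := hb y.
have p : 0 < 1 + `|y| by apply: (lt_le_trans ltr01); rewrite lerDl normr_ge0.
by move=> h; rewrite [(1 + _) * _]mulrC -ler_pdivrMr.
Qed.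

Lemma inner_le (R : realType) (H : completeNormedModType R) (inner : H -> H -> R)
  (a b : H) : is_hilbert_inner inner -> inner a (- b) <= `|a| * `|b|.
Proof.
move=> hI; rewrite -(normrN b); apply: le_trans (inner_CS hI a (- b)).
exact: ler_norm.
Qed.

Lemma sqrt_cont_comp (R : realType) (H : completeNormedModType R) (F : H -> R) :
  continuous F -> continuous (fun y => Num.sqrt (F y)).
Proof.
move=> Fc y; apply: (@continuous_comp _ _ _ F Num.sqrt); first exact: Fc.
exact: sqrt_continuous.
Qed.

Lemma contM (R : realType) (T : topologicalType) (F G : T -> R) :
  continuous F -> continuous G -> continuous (fun y => F y * G y).
Proof. by move=> Fc Gc y; exact: (cvgM (Fc y) (Gc y)). Qed.

Lemma contD (R : realType) (T : topologicalType) (F G : T -> R) :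
  continuous F -> continuous G -> continuous (fun y => F y + G y).
Proof. by move=> Fc Gc y; exact: (cvgD (Fc y) (Gc y)). Qed.

Lemma contC (R : realType) (T : topologicalType) (k : R) :
  continuous (fun _ : T => k).
Proof. by move=> y; exact: cvg_cst. Qed.

Lemma contComp (R : realType) (T : topologicalType) (F : T -> R) (G : R -> R) :
  continuous F -> continuous G -> continuous (fun y => G (F y)).
Proof. by move=> Fc Gc y; apply: (continuous_comp (Fc y)); exact: Gc. Qed.

Lemma norm_bound (R : realType) (H : completeNormedModType R) inner L g c (x : R -> H) :
  Hyp inner L g c x -> forall t : R, 0 <= t ->
  1 + `|x t| <= expR (2 / c * Num.sqrt (L 0)).
Proof.
move=> hyp t t0; have [hI L0 hg c0 [hb [x00 xr xd]]] := hyp.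
set K0 := expR _.
have K0pos : 0 < K0 by exact: expR_gt0.
have key : forall e, 0 < e -> 1 + `|x t| <= (1 + Num.sqrt e) * K0.
  move=> e e0.
  pose Phi (y : H) := (1 + Num.sqrt (inner (y - 0) (y - 0) + e)) *
     expR (2 / c * Num.sqrt (L y)).
  have Phic : continuous Phi.
    apply: contM.
      apply: contD; first exact: contC.
      apply: contComp; last exact: sqrt_continuous.
      by apply: contD; [exact: Q_cont | exact: contC].
    apply: contComp; last exact: continuous_expR.
    apply: contM; first exact: contC.
    apply: contComp; [exact: L_cont hyp | exact: sqrt_continuous].
  have [c1 c2] := comp_cont hyp Phic.
  have main : Phi (x t) <= Phi (x 0).
    apply: (core (f := fun τ => Phi (x τ)) (h := fun τ => L (x τ)) (lexx 0) t0 c1 c2).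
    - by move=> τ _; exact: L0.
    - move=> τ τ0 hτ.
      have Nge : 0 <= inner (x τ - 0) (x τ - 0) by rewrite (innerii hI) sqr_ge0.
      have Npos : 0 < inner (x τ - 0) (x τ - 0) + e by apply: ltr_wpDl.
      have DF1 := dD (dC 1 τ) (dsqrt (F := fun τ => inner (x τ - 0) (x τ - 0) + e) Npos (dD (N_der 0 hyp τ0) (dC e τ))).
      have DE := dexp (dK (2 / c) (dsqrt (F := fun τ => L (x τ)) hτ (h_der hyp τ0))).
      have DP := dM DF1 DE.
      eexists; first exact: DP.
      apply: (@ineqP _ c _ _ _ `|x τ - 0|) => //.
      + by rewrite sqrtr_gt0.
      + by rewrite sqrtr_gt0.
      + exact: norm_le_sqrt (ltW e0).
      + exact: inner_le.
      + by rewrite subr0; exact: grad_bound hyp.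
      + exact: expR_gt0.
    - move=> s s0 hs τ sτ; rewrite /Phi.
      by rewrite (x_const hyp s0 hs sτ).
  move: main; rewrite /Phi x00 subrr (inner0l hI) add0r -/K0 => main.
  apply: le_trans main.
  have h1 : 1 + `|x t| <= 1 + Num.sqrt (inner (x t - 0) (x t - 0) + e).
    by rewrite lerD2l -[X in `|X|](subr0 (x t)); exact: norm_le_sqrt (ltW e0).
  have h2 : 1 <= expR (2 / c * Num.sqrt (L (x t))).
    rewrite -expR0 ler_expR mulr_ge0 // ?sqrtr_ge0 //.
    by rewrite divr_ge0 // ltW.
  apply: le_trans h1 _; rewrite ler_peMr //.
apply/ler_addgt0Pr => d d0.
have := key ((d / K0) ^+ 2) (exprn_gt0 _ (divr_gt0 d0 K0pos)).
rewrite sqrtr_sqr ger0_norm; last by rewrite divr_ge0 // ltW.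
move=> h; apply: le_trans h _.
by rewrite mulrDl mul1r divfK // gt_eqF.
Qed.


Lemma grad_boundM (R : realType) (H : completeNormedModType R) inner L g c (x : R -> H)
  (t : R) : Hyp inner L g c x -> 0 <= t ->
  c * Num.sqrt (L (x t)) <= (1 + (expR (2 / c * Num.sqrt (L 0)) - 1)) * `|g (x t)|.
Proof.
move=> hyp t0; apply: le_trans (grad_bound (x t) hyp) _.
apply: ler_wpM2r => //; rewrite [1 + (_ - 1)]addrC subrK. by have := norm_bound hyp t0.
Qed.

Lemma h_small (R : realType) (H : completeNormedModType R) inner L g c (x : R -> H) :
  Hyp inner L g c x -> forall d : R, 0 < d -> exists T : R, 0 <= T /\ L (x T) < d.
Proof.
move=> hyp d d0; have [hI L0 hg c0 [hb [x00 xr xd]]] := hyp.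
apply: contrapT => nE.
have big : forall T : R, 0 <= T -> d <= L (x T).
  move=> T T10; rewrite leNgt; apply/negP => hT; by apply: nE; exists T; split.
set M1 := 1 + (expR (2 / c * Num.sqrt (L 0)) - 1).
have M1pos : 0 < M1 by rewrite /M1 [1 + (_ - 1)]addrC subrK expR_gt0.
set k := c ^+ 2 * d / M1 ^+ 2.
have k0 : 0 < k by rewrite /k divr_gt0 ?mulr_gt0 ?exprn_gt0.
have [c1 c2] := comp_cont hyp (L_cont hyp).
have lin_c : continuous (fun τ : R => k * τ).
  by apply: contM; [exact: contC | move=> y; exact: cvg_id].
set T1 := L (x 0) / k + 1.
have T10 : 0 <= T1 by rewrite /T1 addr_ge0 // divr_ge0 // ltW.
have : L (x T1) + k * T1 <= L (x 0) + k * 0.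
  apply: (mono (f := fun τ => L (x τ) + k * τ)) => //.
  - move=> τ τ0; apply: continuousD; [exact: c1|exact: lin_c].
  - apply: cvgD => //; apply: cvg_at_right_filter; exact: lin_c.
  - move=> τ τ1 _.
    have τ0 : 0 <= τ by exact: ltW.
    eexists; first exact: (dD (h_der hyp τ1) (dK k (did τ))).
    rewrite mulr1.
    have gb := grad_boundM hyp τ0; rewrite -/M1 in gb.
    have hd := big τ τ0.
    have sq : c ^+ 2 * L (x τ) <= M1 ^+ 2 * `|g (x τ)| ^+ 2.
      have p0 : 0 <= c * Num.sqrt (L (x τ)) by rewrite mulr_ge0 ?sqrtr_ge0 // ltW.
      have := ler_pM p0 p0 gb gb.
      by rewrite -!expr2 !exprMn sqr_sqrtr.
    have : k <= `|g (x τ)| ^+ 2.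
      rewrite /k ler_pdivrMr ?exprn_gt0 // [_ * M1 ^+ 2]mulrC.
      apply: le_trans sq; apply: ler_wpM2l => //; exact: sqr_ge0.
    lra.
move=> hh.
have e : k * T1 = L (x 0) + k.
  by rewrite /T1 mulrDr mulr1 [k * (_ / _)]mulrC divfK // gt_eqF.
have := L0 (x T1); move: hh; rewrite e mulr0; lra.
Qed.


Lemma cauchy_bound (R : realType) (H : completeNormedModType R) inner L g c (x : R -> H) :
  Hyp inner L g c x -> forall s t : R, 0 <= s -> s <= t ->
  `|x t - x s| <= 2 * (1 + (expR (2 / c * Num.sqrt (L 0)) - 1)) / c * Num.sqrt (L (x s)).
Proof.
move=> hyp s t s0 st; have [hI L0 hg c0 [hb [x00 xr xd]]] := hyp.
set K := 2 * _ / c.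
have K0 : 0 <= K.
  have e1 : 0 < expR (2 / c * Num.sqrt (L 0)) := expR_gt0 _.
  rewrite /K [1 + (_ - 1)]addrC subrK; apply: divr_ge0; last exact: ltW.
  by apply: mulr_ge0 => //; exact: ltW.
have key : forall e, 0 < e -> `|x t - x s| <= Num.sqrt e + K * Num.sqrt (L (x s)).
  move=> e e0.
  pose Phi (y : H) := Num.sqrt (inner (y - x s) (y - x s) + e) + K * Num.sqrt (L y).
  have Phic : continuous Phi.
    apply: contD.
      apply: contComp; last exact: sqrt_continuous.
      by apply: contD; [exact: Q_cont | exact: contC].
    apply: contM; first exact: contC.
    apply: contComp; [exact: L_cont hyp | exact: sqrt_continuous].
  have [c1 c2] := comp_cont hyp Phic.
  have main : Phi (x t) <= Phi (x s).
    apply: (core (f := fun τ => Phi (x τ)) (h := fun τ => L (x τ)) s0 st c1 c2).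
    - by move=> τ _; exact: L0.
    - move=> τ τ0 hτ.
      have Nge : 0 <= inner (x τ - x s) (x τ - x s) by rewrite (innerii hI) sqr_ge0.
      have Npos : 0 < inner (x τ - x s) (x τ - x s) + e by apply: ltr_wpDl.
      have D1 := dsqrt (F := fun τ => inner (x τ - x s) (x τ - x s) + e) Npos
                   (dD (N_der (x s) hyp τ0) (dC e τ)).
      have D2 := dK K (dsqrt (F := fun τ => L (x τ)) hτ (h_der hyp τ0)).
      have DP := dD D1 D2.
      eexists; first exact: DP.
      apply: (@ineqQ _ c _ _ _ `|x τ - x s|) => //.
      + by rewrite sqrtr_gt0.
      + by rewrite sqrtr_gt0.
      + exact: norm_le_sqrt (ltW e0).
      + exact: inner_le.
      + by have := grad_boundM hyp (ltW τ0).
    - move=> s' s'0 hs τ sτ; rewrite /Phi.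
      by rewrite (x_const hyp s'0 hs sτ).
  move: main; rewrite /Phi subrr (inner0l hI) add0r => main.
  have h1 : `|x t - x s| <= Num.sqrt (inner (x t - x s) (x t - x s) + e).
    exact: norm_le_sqrt (ltW e0).
  have h2 : 0 <= K * Num.sqrt (L (x t)) by rewrite mulr_ge0 // sqrtr_ge0.
  lra.
apply/ler_addgt0Pr => d d0.
have := key (d ^+ 2) (exprn_gt0 _ d0).
rewrite sqrtr_sqr ger0_norm; last exact: ltW.
move=> h; lra.
Qed.


Unset Implicit Arguments. Set Strict Implicit. Set Printing Implicit Defensive.

Theorem corollary2p5 (R : realType) (H : completeNormedModType R)
  (inner : H -> H -> R) (L : H -> R) (gradL : H -> H) (c : R) (x : R -> H) :
  is_hilbert_inner inner ->
  (forall y, 0 <= L y) ->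
  is_C2_with_gradient inner L gradL ->
  0 < c ->
  (forall y, `|gradL y| >= c * Num.sqrt (L y) / (1 + `|y|)) ->
  is_gradient_flow gradL x 0 ->
  exists xinf : H,
    [/\ `|xinf| <= expR (2 / c * Num.sqrt (L 0)) - 1,
        L xinf = 0
      & x t @[t --> +oo] --> xinf].
Proof.
move=> hI L0 [hg _ _] c0 hb hf.
have hyp : Hyp inner L gradL c x by split.
set K0 := expR _.
set K := 2 * (1 + (K0 - 1)) / c.
have K0pos : 0 < K0 by exact: expR_gt0.
have Kpos : 0 < K.
  rewrite /K [1 + (_ - 1)]addrC subrK; apply: divr_gt0 => //.
  by apply: mulr_gt0.
have hsmall : forall d : R, 0 < d -> \forall t \near +oo, L (x t) < d.
  move=> d d0; have [T [T0 hT]] := h_small hyp d0.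
  near=> t; apply: le_lt_trans hT; apply: (h_mono hyp T0).
  by near: t; apply: nbhs_pinfty_ge; rewrite num_real.
have xcvg : cvg (x t @[t --> +oo]).
  apply: cauchy_cvg; apply: cauchy_exP => e e0.
  have ee : 0 < e / (K + 1) by rewrite divr_gt0 // addr_gt0.
  have [T [T0 hT]] := h_small hyp (exprn_gt0 2 ee).
  exists (x T).
  suff : \forall t \near +oo, ball (x T) e (x t) by [].
  near=> t.
  rewrite /= -ball_normE /ball_ /= distrC.
  have Tt : T <= t by near: t; apply: nbhs_pinfty_ge; rewrite num_real.
  apply: le_lt_trans (cauchy_bound hyp T0 Tt) _; rewrite -/K0 -/K.
  have hs : Num.sqrt (L (x T)) < e / (K + 1).
    have : Num.sqrt (L (x T)) < Num.sqrt ((e / (K + 1)) ^+ 2).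
      by rewrite ltr_sqrt // exprn_gt0.
    by rewrite sqrtr_sqr ger0_norm // ltW.
  apply: le_lt_trans (ler_wpM2l (ltW Kpos) (ltW hs)) _.
  rewrite mulrA ltr_pdivrMr ?addr_gt0 //; lra.
set xinf := lim (x t @[t --> +oo]).
have hx : x t @[t --> +oo] --> xinf by exact: xcvg.
exists xinf; split => //.
- apply: (cvgr_to_le (cvg_norm hx)); near=> t.
  have t0 : 0 <= t by near: t; apply: nbhs_pinfty_ge; rewrite num_real.
  have := norm_bound hyp t0; rewrite -/K0; lra.
- have hL : L (x t) @[t --> +oo] --> L xinf.
    apply: cvg_comp hx _; exact: (L_cont hyp).
  apply/le_anti; rewrite L0 andbT; apply/ler_addgt0Pr => d d0; rewrite add0r.
  apply: (cvgr_to_le hL); near=> t; apply: ltW.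
  by near: t; exact: hsmall.
Unshelve. all: by end_near. Qed.
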